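(* Let $\alpha_1,\alpha_2\ge 0$ with $\alpha_1+\alpha_2=1$, $T>0$, $V\ge 0$. For problem (P1) below, the optimal UAV trajectory $x^*$ satisfies $x^*(t)\in[-D/2,D/2]$ for all $t\in[0,T]$, i.e. the UAV stays above the line segment between the two ground users. Problem (P1): maximize $r$ over $(r,r_1,r_2,x,p_1,p_2)$ subject to $r_k\ge\alpha_k r$ for $k=1,2$; $(r_1,r_2)\in\mathcal{C}(x,p)$; $p_1(t)+p_2(t)\le\bar P$ and $p_k(t)\ge 0$ for all $t\in[0,T]$; $|\dot x(t)|\le V$ for all $t\in[0,T]$.
   Context: Fix $D>0$, $H>0$, $\beta_0>0$, $\bar P>0$. Ground users GU 1, GU 2 are at horizontal positions $x_1=-D/2$, $x_2=D/2$; for UAV position $x\in\mathbb{R}$ (constant altitude $H$), $h_k(x)=\beta_0/((x-x_k)^2+H^2)$. A trajectory is a function $x:[0,T]\to\mathbb{R}$ ($V$-Lipschitz under the speed constraint), and a power allocation is a pair of measurable functions $p_1,p_2:[0,T]\to[0,\infty)$. $\mathcal{C}(x,p)$ is the set of $(r_1,r_2)$, $r_1,r_2\ge0$, with $r_1\le\frac1T\int_0^T\log_2(1+p_1(t)h_1(x(t)))dt$, $r_2\le\frac1T\int_0^T\log_2(1+p_2(t)h_2(x(t)))dt$, $r_1+r_2\le\frac1T\int_0^T\log_2(1+p_1(t)h_1(x(t))+p_2(t)h_2(x(t)))dt$. *)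

(* Defs.v *)
From HB Require Import structures.
From mathcomp Require Import all_boot all_order all_algebra.
From mathcomp Require Import all_classical all_reals all_analysis.
Set Implicit Arguments. Unset Strict Implicit. Unset Printing Implicit Defensive.
Import Order.TTheory GRing.Theory Num.Theory.
Local Open Scope classical_set_scope.
Local Open Scope ring_scope.

Section Defs.
Variable R : realType.

Definition log2 (y : R) : R := ln y / ln 2.

Definition gain (beta0 H xk x : R) : R := beta0 / ((x - xk) ^+ 2 + H ^+ 2).

Definition gu1 (D : R) : R := - (D / 2).
Definition gu2 (D : R) : R := D / 2.

Definition avg_rate (T : R) (f : R -> R) : \bar R :=
  ((T^-1)%:E * \int[lebesgue_measure]_(t in `[0%R, T]%classic) (f t)%:E)%E.

Definition in_cap_region (D H beta0 T : R) (x p1 p2 : R -> R) (r1 r2 : R) : Prop :=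
  [/\ 0 <= r1, 0 <= r2,
      (r1%:E <= avg_rate T (fun t => log2 (1 + p1 t * gain beta0 H (gu1 D) (x t))))%E,
      (r2%:E <= avg_rate T (fun t => log2 (1 + p2 t * gain beta0 H (gu2 D) (x t))))%E &
      ((r1 + r2)%:E <= avg_rate T (fun t => log2 (1 + p1 t * gain beta0 H (gu1 D) (x t)
                                             + p2 t * gain beta0 H (gu2 D) (x t))))%E].

Definition P1_feasible (D H beta0 Pbar a1 a2 T V : R)
    (r r1 r2 : R) (x p1 p2 : R -> R) : Prop :=
  [/\ a1 * r <= r1 /\ a2 * r <= r2,
      in_cap_region D H beta0 T x p1 p2 r1 r2,
      (measurable_fun `[0%R, T]%classic p1 /\ measurable_fun `[0%R, T]%classic p2),
      (forall t, t \in `[0, T] -> [/\ 0 <= p1 t, 0 <= p2 t & p1 t + p2 t <= Pbar]) &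
      (* speed constraint |x'(t)| <= V, i.e. x is V-Lipschitz on [0,T] *)
      (forall s t, s \in `[0, T] -> t \in `[0, T] -> `|x s - x t| <= V * `|s - t|)].

Definition P1_optimal (D H beta0 Pbar a1 a2 T V : R)
    (r r1 r2 : R) (x p1 p2 : R -> R) : Prop :=
  P1_feasible D H beta0 Pbar a1 a2 T V r r1 r2 x p1 p2 /\
  forall r' r1' r2' x' p1' p2',
    P1_feasible D H beta0 Pbar a1 a2 T V r' r1' r2' x' p1' p2' -> r' <= r.

End Defs.

(* Main.v *)
From HB Require Import structures.
From mathcomp Require Import all_boot all_order all_algebra.
From mathcomp Require Import all_classical all_reals all_analysis.
From mathcomp Require Import ring lra measurable_realfun.
Require Import Defs.
Import Order.TTheory GRing.Theory Num.Theory.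
Import numFieldNormedType.Exports.
Local Open Scope ring_scope.

Lemma gain_cont (R : realType) (b H xk : R) : 0 < H ->
  continuous (fun y : R => b / ((y - xk) ^+ 2 + H ^+ 2)).
Proof.
move=> hH y.
apply: cvgM; first exact: cvg_cst.
apply: cvgV.
  rewrite gt_eqF //; apply: (lt_le_trans (y := H ^+ 2)); first by rewrite exprn_gt0.
  by rewrite lerDr sqr_ge0.
apply: cvgD; last exact: cvg_cst.
under eq_fun do rewrite expr2. by apply: cvgM; apply: cvgB; (exact: cvg_id || exact: cvg_cst).
Qed.

Lemma lip_cont (R : realType) (V : R) (f : R -> R) : 0 <= V ->
  (forall s t, `|f s - f t| <= V * `|s - t|) -> continuous f.
Proof.
move=> hV hf t.
apply/cvgrPdist_le => e e0.
near=> s.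
apply: (le_trans (hf t s)).
have : `|t - s| <= e / (V + 1).
  near: s. apply: (cvgrPdist_le _ _).1; first exact: cvg_id. by rewrite divr_gt0 // ltr_wpDl.
move=> h.
apply: (le_trans (ler_wpM2l hV h)).
rewrite mulrA ler_pdivrMr ?ltr_wpDl //; nra.
Unshelve. all: by end_near.
Qed.

Lemma mlog2 (R : realType) (D : set R) (w : R -> R) : measurable D ->
  measurable_fun D w -> measurable_fun D (fun t => (log2 (w t))%:E).
Proof.
move=> mD mw; apply/measurable_EFinP; rewrite /log2.
apply: measurable_funM; last exact: measurable_cst.
exact: (measurableT_comp (@measurable_ln R) mw).
Qed.

Lemma ind0 (R : realType) (A : set R) t : 0 <= \1_A t :> R.
Proof. by rewrite indicE ler0n. Qed.

Lemma indic_cases (R : realType) (A : set R) (t : R) :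
  (A t /\ \1_A t = 1 :> R) \/ (~ A t /\ \1_A t = 0 :> R).
Proof.
rewrite indicE; case: (boolP (t \in A)) => h.
  by left; split; [exact: set_mem|].
by right; split; [move=> At; move/negP: h; apply; exact: mem_set|].
Qed.

Lemma rate_gain (R : realType) (T a b M m : R) (w w' : R -> R) :
  0 < T -> 0 <= a -> a < b -> b <= T -> 0 < m -> 0 < M ->
  measurable_fun `[0%R, T]%classic w -> measurable_fun `[0%R, T]%classic w' ->
  (forall t, t \in `[0, T] -> [/\ 1 <= w t, w t <= M & w t <= w' t]) ->
  (forall t, t \in `[a, b] -> w t + m <= w' t) ->
  exists2 c, 0 < c & forall r, (r%:E <= avg_rate T (fun t => log2 (w t)))%E ->
     ((r + c)%:E <= avg_rate T (fun t => log2 (w' t)))%E.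
Proof.
move=> T0 a0 ab bT m0 M0 mw mw' hw hab.
have l20 : 0 < ln (2 : R) by apply: ln_gt0; lra.
have l2K (y : R) : 0 < y -> 0 < y -> True by [].
pose k := log2 (1 + m / M).
have k0 : 0 < k by rewrite /k /log2 divr_gt0 // ln_gt0 // ltrDl divr_gt0.
exists ((b - a) * k / T); first by rewrite divr_gt0 // mulr_gt0 // subr_gt0.
move=> r hr.
have mD : measurable (`[0%R, T]%classic : set R) by exact: measurable_itv.
set D := (`[0%R, T]%classic : set R).
have hwD t : D t -> [/\ 1 <= w t, w t <= M & w t <= w' t].
  by move=> Dt; apply: hw.
have L0 t : D t -> (0 <= (log2 (w t))%:E)%E.
  move=> /hwD [h1 _ _]; rewrite lee_fin /log2 divr_ge0 ?ln_ge0 //; lra.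
have L0' t : D t -> (0 <= (log2 (w' t))%:E)%E.
  move=> /hwD [h1 _ h2]; rewrite lee_fin /log2 divr_ge0 ?ln_ge0 //; lra.
have mab : measurable (`[a, b]%classic : set R) by exact: measurable_itv.
pose g t := (k * \1_(`[a, b]%classic : set R) t)%:E.
have g0 t : (0 <= g t)%E.
  by rewrite /g lee_fin; apply: mulr_ge0; [exact: ltW| rewrite indicE ler0n].
have mg : measurable_fun D g.
  apply/measurable_EFinP; apply: measurable_funM; first exact: measurable_cst.
  exact: measurable_indic.
have key : (\int[lebesgue_measure]_(t in D) (log2 (w t))%:E
    + ((b - a) * k)%:E <= \int[lebesgue_measure]_(t in D) (log2 (w' t))%:E)%E.
  have -> : (((b - a) * k)%:E = \int[lebesgue_measure]_(t in D) g t)%E.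
    rewrite /g.
    under eq_integral do rewrite EFinM.
    rewrite ge0_integralZl_EFin //; [|by apply/measurable_EFinP; exact: measurable_indic|exact: ltW].
    rewrite integral_indic // setIidl; last first.
      move=> t /=; rewrite !in_itv /= => /andP [h1 h2].
      rewrite /D /= in_itv /= (le_trans a0 h1) (le_trans h2 bT) //.
    rewrite [X in (_ * X)%E]lebesgue_measure_itv /= lte_fin ab -EFinD -EFinM mulrC; congr (_%:E).
  rewrite -ge0_integralD //; last exact: mlog2.
  apply: ge0_le_integral => //.
  - by move=> t Dt; rewrite adde_ge0 // L0.
  - by apply: emeasurable_funD => //; exact: mlog2.
  - exact: mlog2.
  move=> t Dt; rewrite /g.
  have [h1 h2 h3] := hwD t Dt.
  have [[tab ->]|[tab ->]] := indic_cases R `[a, b]%classic t.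
    rewrite mulr1 -EFinD lee_fin /log2 -mulrDl ler_pM2r ?invr_gt0 //.
    rewrite -lnM ?posrE; [|lra|]; last by rewrite ltr_wpDr ?divr_ge0 ?ltW.
    rewrite ler_ln ?posrE; [|rewrite mulr_gt0 //; [lra|rewrite ltr_wpDr ?divr_ge0 ?ltW //]|lra].
    have := hab t tab.
    have hm : w t * (m / M) <= m.
      by rewrite mulrCA ger_pMr // ler_pdivrMr // mul1r.
    nra.
  rewrite mulr0 adde0 lee_fin /log2 ler_pM2r ?invr_gt0 // ler_ln ?posrE; lra.
rewrite /avg_rate in hr *.
apply: (le_trans _ (lee_wpmul2l _ key)); last by rewrite lee_fin invr_ge0 ltW.
rewrite ge0_muleDr; [|by apply: integral_ge0|by rewrite lee_fin; apply: mulr_ge0; [rewrite subr_ge0 ltW|exact: ltW]].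
rewrite EFinD; apply: leeD => //.
by rewrite -EFinM lee_fin mulrC mulrA.
Qed.

Section H.
Variable R : realType.
Implicit Types x y z d lo hi : R.

Lemma max_cases x y : (x <= y /\ Num.max x y = y) \/ (y <= x /\ Num.max x y = x).
Proof.
by case: lerP => h; [left|right; split => //; exact: ltW].
Qed.

Lemma min_cases x y : (x <= y /\ Num.min x y = x) \/ (y <= x /\ Num.min x y = y).
Proof.
by case: lerP => h; [left|right; split => //; exact: ltW].
Qed.

Definition clampr lo hi y := Num.max lo (Num.min hi y).

Lemma clamp_cases lo hi y : lo <= hi ->
  (y <= lo /\ clampr lo hi y = lo) \/ (lo <= y <= hi /\ clampr lo hi y = y)
  \/ (hi <= y /\ clampr lo hi y = hi).
Proof.
move=> lh; rewrite /clampr.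
have [[h1 ->]|[h1 ->]] := min_cases hi y.
  have [[h2 ->]|[h2 ->]] := max_cases lo hi; last by right; right; split => //; lra.
  by right; right.
have [[h2 ->]|[h2 ->]] := max_cases lo y; first by right; left; split => //; apply/andP.
by left.
Qed.

Lemma clamp_lip lo hi y z : lo <= hi ->
  `|clampr lo hi y - clampr lo hi z| <= `|y - z|.
Proof.
move=> lh; have h1 := ler_norm (y - z); have h2 := ler_norm (z - y).
rewrite distrC in h2; rewrite ler_norml.
have [[? ->]|[[/andP [? ?] ->]|[? ->]]] := clamp_cases _ _ y lh;
have [[? ->]|[[/andP [? ?] ->]|[? ->]]] := clamp_cases _ _ z lh; apply/andP; split; lra.
Qed.

Lemma clamp_in lo hi y : lo <= hi -> lo <= clampr lo hi y <= hi.
Proof.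
move=> lh; have [[? ->]|[[/andP [? ?] ->]|[? ->]]] := clamp_cases _ _ y lh; apply/andP; split; lra.
Qed.

Lemma clamp_id lo hi y : lo <= y <= hi -> clampr lo hi y = y.
Proof.
move=> /andP [h1 h2].
have lh : lo <= hi by lra.
have [[? ->]|[[/andP [? ?] ->]|[? ->]]] := clamp_cases _ _ y lh => //; lra.
Qed.

Lemma clamp_sq d xk y : 0 < d -> (xk = d \/ xk = - d) ->
  (clampr (- d) d y - xk) ^+ 2 <= (y - xk) ^+ 2.
Proof.
move=> d0 hk; have lh : - d <= d by lra.
have [[? ->]|[[/andP [? ?] ->]|[? ->]]] := clamp_cases _ _ y lh => //;
case: hk => ->; nra.
Qed.

Lemma clamp_sq_eta d e xk y : 0 < d -> 0 <= e -> (xk = d \/ xk = - d) ->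
  d + e <= `|y| -> (clampr (- d) d y - xk) ^+ 2 + e ^+ 2 <= (y - xk) ^+ 2.
Proof.
move=> d0 e0 hk; rewrite ler_normr => /orP hy; have lh : - d <= d by lra.
have [[? ->]|[[/andP [? ?] ->]|[? ->]]] := clamp_cases _ _ y lh => //;
case: hk => ->; case: hy => ?; nra.
Qed.

Lemma clamp_sq_le d xk y : 0 < d -> (xk = d \/ xk = - d) ->
  (clampr (- d) d y - xk) ^+ 2 <= (2 * d) ^+ 2.
Proof.
move=> d0 hk; have lh : - d <= d by lra.
have /andP [h1 h2] := clamp_in _ _ y lh.
case: hk => ->; nra.
Qed.

End H.

Section G.
Variable R : realType.

Lemma div_anti (b A B : R) : 0 < b -> 0 < A -> A <= B -> b / B <= b / A.
Proof.
move=> b0 A0 AB; rewrite ler_pM2l // lef_pV2 ?posrE //; lra.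
Qed.

Lemma den_pos (H xk y : R) : 0 < H -> 0 < (y - xk) ^+ 2 + H ^+ 2.
Proof. by move=> H0; rewrite ltr_wpDl ?sqr_ge0 ?exprn_gt0. Qed.

Lemma gain_pos (b H xk y : R) : 0 < b -> 0 < H -> 0 < gain b H xk y.
Proof. by move=> b0 H0; rewrite /gain divr_gt0 // den_pos. Qed.

Lemma gain_le_max (b H xk y : R) : 0 < b -> 0 < H -> gain b H xk y <= b / H ^+ 2.
Proof.
move=> b0 H0; rewrite /gain div_anti ?exprn_gt0 //.
by rewrite lerDr sqr_ge0.
Qed.

Lemma gain_anti (b H xk y y' : R) : 0 < b -> 0 < H ->
  (y' - xk) ^+ 2 <= (y - xk) ^+ 2 -> gain b H xk y <= gain b H xk y'.
Proof. by move=> b0 H0 h; rewrite /gain div_anti ?den_pos // lerD2r. Qed.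

Lemma gain_lb (b H xk y' K : R) : 0 < b -> 0 < H ->
  (y' - xk) ^+ 2 <= K -> b / (K + H ^+ 2) <= gain b H xk y'.
Proof. by move=> b0 H0 h; rewrite /gain div_anti ?den_pos // lerD2r. Qed.

Lemma gain_theta (b H xk y y' K e : R) : 0 < b -> 0 < H -> 0 <= e ->
  (y' - xk) ^+ 2 <= K -> (y' - xk) ^+ 2 + e ^+ 2 <= (y - xk) ^+ 2 ->
  gain b H xk y <= (K + H ^+ 2) / (K + H ^+ 2 + e ^+ 2) * gain b H xk y'.
Proof.
move=> b0 H0 e0 h1 h2; rewrite /gain.
set A' := (y' - xk) ^+ 2 + H ^+ 2; set A := (y - xk) ^+ 2 + H ^+ 2.
set K' := K + H ^+ 2.
have A'0 : 0 < A' by exact: den_pos.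
have A0 : 0 < A by exact: den_pos.
have K'0 : 0 < K'.
  rewrite /K'; apply: (lt_le_trans A'0); rewrite /A' lerD2r //.
have hA : A' + e ^+ 2 <= A by rewrite /A /A'; lra.
have hK : A' <= K' by rewrite /A' /K'; lra.
have e2 : 0 <= e ^+ 2 by exact: sqr_ge0.
rewrite -subr_ge0.
have -> : K' / (K' + e ^+ 2) * (b / A') - b / A =
   b * (K' * A - (K' + e ^+ 2) * A') / ((K' + e ^+ 2) * A' * A).
  field; apply/and3P; split; rewrite ?gt_eqF //; lra.
apply: divr_ge0; last by apply: mulr_ge0; [apply: mulr_ge0|]; lra.
apply: mulr_ge0; first lra.
nra.
Qed.

End G.

Lemma prod_step (R : realType) (p g g' th P G : R) : 0 <= p -> 0 <= g -> g <= th * g' ->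
  G <= g' -> 0 <= th <= 1 -> 0 <= P -> 0 <= G ->
  p * g + (1 - th) * P * G <= (th * p + (1 - th) * P) * g'.
Proof.
move=> p0 g0 h1 h2 /andP [t0 t1] P0 G0.
have k1 : 0 <= p * (th * g' - g) by apply: mulr_ge0; lra.
have k2 : 0 <= (1 - th) * P * (g' - G) by apply: mulr_ge0; [apply: mulr_ge0|]; lra.
nra.
Qed.

Lemma in_cc (R : realType) (a b t : R) : (t \in `[a, b]) = (a <= t <= b).
Proof. by rewrite in_itv. Qed.

Section Arith.
Context {R : realType}.
Lemma h_pos3 {B : R} : 0 <= B -> 0 < 1 + B + B. Proof. move=> ?; lra. Qed.
Lemma h_le1 {u : R} : 0 <= u -> 1 <= 1 + u. Proof. move=> ?; lra. Qed.
Lemma h_le1' {u v : R} : 0 <= u -> 0 <= v -> 1 <= 1 + u + v. Proof. move=> ? ?; lra. Qed.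
Lemma h_leM {u B : R} : u <= B -> 0 <= B -> 1 + u <= 1 + B + B. Proof. move=> ? ?; lra. Qed.
Lemma h_leM' {u v B : R} : u <= B -> v <= B -> 1 + u + v <= 1 + B + B. Proof. move=> ? ?; lra. Qed.
Lemma h_sum {u u' v v' m : R} : u + m <= u' -> v <= v' -> 1 + u + v + m <= 1 + u' + v'.
Proof. move=> ? ?; lra. Qed.
Lemma h_min3 {c1 c2 c3 : R} : 0 < c1 -> 0 < c2 -> 0 < c3 ->
  [/\ Num.min c1 (Num.min c2 c3) <= c1, Num.min c1 (Num.min c2 c3) <= c2,
      Num.min c1 (Num.min c2 c3) <= c3 & 0 < Num.min c1 (Num.min c2 c3)].
Proof.
move=> ? ? ?; have [[? e]|[? e]] := min_cases R c2 c3; rewrite e;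
[have [[? ->]|[? ->]] := min_cases R c1 c2|have [[? ->]|[? ->]] := min_cases R c1 c3];
split; lra.
Qed.
Lemma h_rate {r1 r2 a1 a2 c c3 : R} : a1 + a2 = 1 -> c <= c3 ->
  r1 + a1 * c + (r2 + a2 * c) <= r1 + r2 + c3.
Proof.
move=> ha hc; have hac : a1 * c + a2 * c = c by rewrite -mulrDl ha mul1r.
lra.
Qed.
Lemma h_ac {a1 a2 c c1 : R} : 0 <= a1 -> 0 <= a2 -> a1 + a2 = 1 -> 0 <= c -> c <= c1 ->
  a1 * c <= c1.
Proof.
move=> h1 h2 ha c0 cc; apply: le_trans cc.
rewrite -[X in _ <= X]mul1r ler_wpM2r //; lra.
Qed.
Lemma h_pow {p1 p2 th P : R} : 0 <= p1 -> 0 <= p2 -> p1 + p2 <= P -> 0 < th -> th < 1 ->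
  0 < P -> [/\ 0 <= th * p1 + (1 - th) * (P / 2), 0 <= th * p2 + (1 - th) * (P / 2) &
    th * p1 + (1 - th) * (P / 2) + (th * p2 + (1 - th) * (P / 2)) <= P].
Proof.
move=> h1 h2 h3 t0 t1 P0.
have k1 := mulr_ge0 (ltW t0) h1; have k2 := mulr_ge0 (ltW t0) h2.
have k3 := ler_wpM2l (ltW t0) h3.
have k4 : 0 <= (1 - th) * (P / 2) by apply: mulr_ge0; rewrite ?divr_ge0; lra.
split; lra.
Qed.
Lemma h_contra {r c : R} : 0 < c -> r + c <= r -> False.
Proof. move=> ? ?; lra. Qed.
End Arith.

Section Arith2.
Context {R : realType}.
Lemma A_hx0 {D y : R} : ~~ (- (D / 2) <= y <= D / 2) -> D / 2 < `|y|.
Proof.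
rewrite negb_and -!ltNge => /orP [h|h]; rewrite ltr_normr; apply/orP; [right|left]; lra.
Qed.
Lemma A_e {d y : R} : d < `|y| -> 0 < (`|y| - d) / 2 /\ (`|y| - d) / 2 * 2 = `|y| - d.
Proof. move=> h; split; [rewrite divr_gt0 //; lra | by rewrite divfK // pnatr_eq0]. Qed.
Lemma A_Vdl {V e : R} : 0 <= V -> 0 < e -> V * (e / (V + 1)) <= e.
Proof. move=> hV he; rewrite mulrA ler_pdivrMr ?ltr_wpDl //; nra. Qed.
Lemma A_ab {t0 dl T : R} : 0 <= t0 -> t0 <= T -> 0 < dl -> 0 < T ->
  [/\ 0 <= Num.max 0 (t0 - dl), t0 - dl <= Num.max 0 (t0 - dl),
      Num.max 0 (t0 - dl) < Num.min T (t0 + dl), Num.min T (t0 + dl) <= T &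
      Num.min T (t0 + dl) <= t0 + dl].
Proof.
move=> ? ? ? ?; have [[? ->]|[? ->]] := max_cases R 0 (t0 - dl);
have [[? ->]|[? ->]] := min_cases R T (t0 + dl); split; lra.
Qed.
Lemma A_tD {a b t0 dl T t : R} : 0 <= a -> t0 - dl <= a -> b <= T -> b <= t0 + dl ->
  a <= t <= b -> (0 <= t <= T) /\ `|t - t0| <= dl.
Proof.
move=> ? ? ? ? /andP [? ?]; split; [apply/andP; split; lra|].
rewrite ler_norml; apply/andP; split; lra.
Qed.
Lemma A_far {d e y y0 : R} : e * 2 = `|y0| - d -> `|y - y0| <= e -> d + e <= `|y|.
Proof.
move=> he h3; have h4 := ler_normB y (y - y0).
rewrite (_ : y - (y - y0) = y0) in h4; last by rewrite opprB addrC subrK.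
lra.
Qed.
Lemma A_th {K H2 e2 : R} : 0 <= K -> 0 < H2 -> 0 < e2 ->
  0 < (K + H2) / (K + H2 + e2) /\ (K + H2) / (K + H2 + e2) < 1.
Proof.
move=> ? ? ?; split; first by rewrite divr_gt0 //; lra.
by rewrite ltr_pdivrMr ?mul1r; lra.
Qed.
Lemma A_mm {th P b K : R} : th < 1 -> 0 < P -> 0 < b -> 0 < K ->
  0 < (1 - th) * (P / 2) * (b / K).
Proof. by move=> ? ? ? ?; rewrite !mulr_gt0 ?divr_gt0 ?invr_gt0 //; lra. Qed.
End Arith2.

Theorem lemma2 (R : realType) (D H beta0 Pbar a1 a2 T V : R)
  (hD : 0 < D) (hH : 0 < H) (hb : 0 < beta0) (hP : 0 < Pbar)
  (ha1 : 0 <= a1) (ha2 : 0 <= a2) (ha : a1 + a2 = 1)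
  (hT : 0 < T) (hV : 0 <= V)
  (r r1 r2 : R) (x p1 p2 : R -> R) :
  P1_optimal D H beta0 Pbar a1 a2 T V r r1 r2 x p1 p2 ->
  forall t, t \in `[0, T] -> - (D / 2) <= x t <= D / 2.
Proof.
move=> [[[ha1r ha2r] [r10 r20 hI1 hI2 hI12] [mp1 mp2] hp hL] opt] t0 ht0.
case: (boolP (- (D / 2) <= x t0 <= D / 2)) => // hn; exfalso.
pose d := D / 2.
have d0 : 0 < d by rewrite divr_gt0.
have dd : - d <= d by rewrite (le_trans _ (ltW d0)) // oppr_le0 ltW.
have hx0 : d < `|x t0| := A_hx0 hn.
pose e := (`|x t0| - d) / 2.
have [e0 he] : 0 < e /\ e * 2 = `|x t0| - d := A_e hx0.
pose dl := e / (V + 1).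
have dl0 : 0 < dl by rewrite divr_gt0 // ltr_wpDl.
have Vdl : V * dl <= e := A_Vdl hV e0.
pose a := Num.max 0 (t0 - dl).
pose b := Num.min T (t0 + dl).
have /andP [ht00 ht0T] : 0 <= t0 <= T by rewrite -in_cc.
have [a0 a1' ab bT b1'] : [/\ 0 <= a, t0 - dl <= a, a < b, b <= T & b <= t0 + dl]
  := A_ab ht00 ht0T dl0 hT.
have hab_in t : t \in `[a, b] -> t \in `[0, T] /\ d + e <= `|x t|.
  rewrite in_cc => hab.
  have [tD' htt] := A_tD a0 a1' bT b1' hab.
  have tD : t \in `[0, T] by rewrite in_cc.
  split => //.
  have h3 : `|x t - x t0| <= e.
    by apply: (le_trans (hL t t0 tD ht0)); apply: le_trans (ler_wpM2l hV htt) Vdl.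
  exact: A_far he h3.
pose x' t := clampr R (- d) d (x t).
pose K0 := (2 * d) ^+ 2.
pose th := (K0 + H ^+ 2) / (K0 + H ^+ 2 + e ^+ 2).
have K00 : 0 <= K0 by exact: sqr_ge0.
have H20 : 0 < H ^+ 2 by exact: exprn_gt0.
have e20 : 0 < e ^+ 2 by exact: exprn_gt0.
have KH0 : 0 < K0 + H ^+ 2 := ltr_wpDl K00 H20.
have [th0 th1] : 0 < th /\ th < 1 := A_th K00 H20 e20.
pose mm := (1 - th) * (Pbar / 2) * (beta0 / (K0 + H ^+ 2)).
have mm0 : 0 < mm := A_mm th1 hP hb KH0.
pose p1' t := p1 t + \1_(`[a, b]%classic : set R) t * ((th - 1) * p1 t + (1 - th) * (Pbar / 2)).
pose p2' t := p2 t + \1_(`[a, b]%classic : set R) t * ((th - 1) * p2 t + (1 - th) * (Pbar / 2)).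
have pE (p : R -> R) t : let p' := p t + \1_(`[a, b]%classic : set R) t * ((th - 1) * p t + (1 - th) * (Pbar / 2)) in
   (t \in `[a, b] /\ p' = th * p t + (1 - th) * (Pbar / 2)) \/ (~ (t \in `[a, b]) /\ p' = p t).
  rewrite /=; have [[h ->]|[h ->]] := indic_cases R `[a, b]%classic t; [left|right];
    (split; [exact: h| ring]).
have Hk xk : (xk = d \/ xk = - d) -> forall (p : R -> R),
    (forall t, t \in `[0, T] -> 0 <= p t) ->
    (forall t, t \in `[0, T] -> p t * gain beta0 H xk (x t) <=
       (p t + \1_(`[a, b]%classic : set R) t * ((th - 1) * p t + (1 - th) * (Pbar / 2)))
         * gain beta0 H xk (x' t)) /\
    (forall t, t \in `[a, b] -> p t * gain beta0 H xk (x t) + mm <=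
       (p t + \1_(`[a, b]%classic : set R) t * ((th - 1) * p t + (1 - th) * (Pbar / 2)))
         * gain beta0 H xk (x' t)).
  move=> hk p hp0.
  have inab t : t \in `[a, b] -> p t * gain beta0 H xk (x t) + mm <=
       (p t + \1_(`[a, b]%classic : set R) t * ((th - 1) * p t + (1 - th) * (Pbar / 2)))
         * gain beta0 H xk (x' t).
    move=> tab; have [tD hxt] := hab_in t tab.
    have [[_ ->]|[nt _]] := pE p t; last by exfalso.
    rewrite /mm; apply: prod_step.
    - exact: hp0.
    - exact/ltW/gain_pos.
    - rewrite /th; apply: gain_theta => //; first exact: ltW.
        exact: clamp_sq_le.
      apply: clamp_sq_eta => //; exact: ltW.
    - apply: gain_lb => //; exact: clamp_sq_le.
    - by apply/andP; split; apply: ltW.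
    - by rewrite divr_ge0 // ltW.
    - exact: divr_ge0 (ltW hb) (ltW KH0).
  split => // t tD.
  have [[tab _]|[nt ->]] := pE p t.
    by apply: le_trans (inab t tab); rewrite lerDl ltW.
  apply: ler_wpM2l; first exact: hp0.
  apply: gain_anti => //; exact: clamp_sq.
have hk1 : gu1 D = d \/ gu1 D = - d by right.
have hk2 : gu2 D = d \/ gu2 D = - d by left.
have [H1a H1b] := Hk _ hk1 p1 (fun t tD => let: And3 h _ _ := hp t tD in h).
have [H2a H2b] := Hk _ hk2 p2 (fun t tD => let: And3 _ h _ := hp t tD in h).
have mD : measurable (`[0%R, T]%classic : set R) by exact: measurable_itv.
have mx : measurable_fun `[0%R, T]%classic x.
  pose xe t := x (clampr R 0 T t).
  have lT : 0 <= T by exact: ltW.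
  have cxe : continuous xe.
    apply: (@lip_cont R V) => // s t.
    have /andP [? ?] := clamp_in R 0 T s lT; have /andP [? ?] := clamp_in R 0 T t lT.
    apply: le_trans (hL _ _ _ _) _; rewrite ?in_cc; first by apply/andP.
      by apply/andP.
    by apply: ler_wpM2l => //; exact: clamp_lip.
  have mxe : measurable_fun `[0%R, T]%classic xe.
    by apply: measurable_funTS; exact: continuous_measurable_fun.
  apply: (eq_measurable_fun xe _ mxe).
  move=> t; rewrite inE /= => htD; rewrite /xe clamp_id //.
have mclamp : measurable_fun setT (clampr R (- d) d).
  apply: continuous_measurable_fun; apply: (@lip_cont R 1) => // s t.
  by rewrite mul1r clamp_lip.
have mx' : measurable_fun `[0%R, T]%classic x' by exact: measurableT_comp mclamp mx.
have mgain xk (f : R -> R) : measurable_fun `[0%R, T]%classic f ->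
    measurable_fun `[0%R, T]%classic (fun t => gain beta0 H xk (f t)).
  move=> mf; apply: (measurableT_comp _ mf).
  by apply: continuous_measurable_fun; exact: gain_cont.
have mp' (p : R -> R) : measurable_fun `[0%R, T]%classic p ->
   measurable_fun `[0%R, T]%classic
     (fun t => p t + \1_(`[a, b]%classic : set R) t * ((th - 1) * p t + (1 - th) * (Pbar / 2))).
  move=> mp; apply: measurable_funD => //; apply: measurable_funM.
    by apply: measurable_indic; exact: measurable_itv.
  apply: measurable_funD; last exact: measurable_cst.
  by apply: measurable_funM => //; exact: measurable_cst.
have mp1' := mp' _ mp1.
have mp2' := mp' _ mp2.
have hpb1 t : t \in `[0, T] -> 0 <= p1 t <= Pbar.
  move=> tD; have [h1 h2 h3] := hp t tD; apply/andP; split => //.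
  by apply: le_trans h3; rewrite lerDl.
have hpb2 t : t \in `[0, T] -> 0 <= p2 t <= Pbar.
  move=> tD; have [h1 h2 h3] := hp t tD; apply/andP; split => //.
  by apply: le_trans h3; rewrite lerDr.
pose B := Pbar * (beta0 / H ^+ 2).
pose M := 1 + B + B.
have B0 : 0 <= B by rewrite /B mulr_ge0 ?divr_ge0 ?ltW.
have M0 : 0 < M by exact: h_pos3.
have pgb (p : R -> R) xk t : 0 <= p t <= Pbar ->
    0 <= p t * gain beta0 H xk (x t) <= B.
  move=> /andP [h1 h2]; apply/andP; split.
    by apply: mulr_ge0 => //; exact/ltW/gain_pos.
  by apply: ler_pM => //; [exact/ltW/gain_pos| exact: gain_le_max].
pose w1 t := 1 + p1 t * gain beta0 H (gu1 D) (x t).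
pose w1' t := 1 + p1' t * gain beta0 H (gu1 D) (x' t).
have [c1 c10 hc1] : exists2 c, 0 < c & forall r0,
    (r0%:E <= avg_rate T (fun t => log2 (w1 t)))%E ->
    ((r0 + c)%:E <= avg_rate T (fun t => log2 (w1' t)))%E.
  apply: (@rate_gain R T a b M mm) => //.
  - apply: measurable_funD; first exact: measurable_cst.
    by apply: measurable_funM => //; exact: mgain.
  - apply: measurable_funD; first exact: measurable_cst.
    by apply: measurable_funM => //; exact: mgain.
  - move=> t tD; have /andP [k1 k2] := pgb p1 (gu1 D) t (hpb1 t tD).
    split; rewrite /w1 /w1' ?lerD2l; [exact: h_le1|exact: h_leM|exact: H1a].
  - move=> t tab; rewrite /w1 /w1' -addrA lerD2l; exact: H1b.
pose w2 t := 1 + p2 t * gain beta0 H (gu2 D) (x t).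
pose w2' t := 1 + p2' t * gain beta0 H (gu2 D) (x' t).
have [c2 c20 hc2] : exists2 c, 0 < c & forall r0,
    (r0%:E <= avg_rate T (fun t => log2 (w2 t)))%E ->
    ((r0 + c)%:E <= avg_rate T (fun t => log2 (w2' t)))%E.
  apply: (@rate_gain R T a b M mm) => //.
  - apply: measurable_funD; first exact: measurable_cst.
    by apply: measurable_funM => //; exact: mgain.
  - apply: measurable_funD; first exact: measurable_cst.
    by apply: measurable_funM => //; exact: mgain.
  - move=> t tD; have /andP [k1 k2] := pgb p2 (gu2 D) t (hpb2 t tD).
    split; rewrite /w2 /w2' ?lerD2l; [exact: h_le1|exact: h_leM|exact: H2a].
  - move=> t tab; rewrite /w2 /w2' -addrA lerD2l; exact: H2b.
pose w3 t := 1 + p1 t * gain beta0 H (gu1 D) (x t) + p2 t * gain beta0 H (gu2 D) (x t).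
pose w3' t := 1 + p1' t * gain beta0 H (gu1 D) (x' t) + p2' t * gain beta0 H (gu2 D) (x' t).
have [c3 c30 hc3] : exists2 c, 0 < c & forall r0,
    (r0%:E <= avg_rate T (fun t => log2 (w3 t)))%E ->
    ((r0 + c)%:E <= avg_rate T (fun t => log2 (w3' t)))%E.
  apply: (@rate_gain R T a b M mm) => //.
  - apply: measurable_funD; last by apply: measurable_funM => //; exact: mgain.
    apply: measurable_funD; first exact: measurable_cst.
    by apply: measurable_funM => //; exact: mgain.
  - apply: measurable_funD; last by apply: measurable_funM => //; exact: mgain.
    apply: measurable_funD; first exact: measurable_cst.
    by apply: measurable_funM => //; exact: mgain.
  - move=> t tD; have /andP [k1 k2] := pgb p1 (gu1 D) t (hpb1 t tD).
    have /andP [k3 k4] := pgb p2 (gu2 D) t (hpb2 t tD).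
    split; rewrite /w3 /w3'; [exact: h_le1'|exact: h_leM'|].
    rewrite -addrA -[X in _ <= X]addrA lerD2l; apply: lerD; [exact: H1a|exact: H2a].
  - move=> t tab; have [tD _] := hab_in t tab.
    have k1 := H1b t tab; have k2 := H2a t tD.
    exact: h_sum k1 k2.
have [cc1 cc2 cc3 c0] := h_min3 c10 c20 c30.
pose c := Num.min c1 (Num.min c2 c3).
have feas : P1_feasible D H beta0 Pbar a1 a2 T V (r + c) (r1 + a1 * c) (r2 + a2 * c)
    x' p1' p2'.
  split.
  - by split; rewrite mulrDr lerD2r.
  - split.
    + by apply: addr_ge0 => //; apply: mulr_ge0 => //; exact: ltW.
    + by apply: addr_ge0 => //; apply: mulr_ge0 => //; exact: ltW.
    + apply: le_trans (hc1 r1 hI1); rewrite lee_fin lerD2l.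
      by apply: h_ac ha1 ha2 ha (ltW c0) cc1.
    + apply: le_trans (hc2 r2 hI2); rewrite lee_fin lerD2l.
      by apply: h_ac ha2 ha1 _ (ltW c0) cc2; rewrite addrC.
    + apply: le_trans (hc3 (r1 + r2) hI12); rewrite lee_fin.
      exact: h_rate.
  - by split.
  - move=> t tD; have [h1 h2 h3] := hp t tD.
    rewrite /p1' /p2'.
    have [[tab ->]|[tab ->]] := pE p1 t; have [[tab' ->]|[tab' ->]] := pE p2 t;
      try (by exfalso; auto); last by split.
    exact: h_pow.
  - move=> s t sD tD; apply: le_trans (hL s t sD tD).
    by apply: clamp_lip; exact: dd.
exact: h_contra c0 (opt _ _ _ _ _ _ feas).
Qed.
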